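(* Let $(\mathcal{S},\mathcal{A},P,r)$ be an MDP with finite state and action spaces and $r\in[0,1]$, and let $\widehat P$ be the empirical kernel formed from $n$ i.i.d. samples $S^1_{s,a},\dots,S^n_{s,a}\sim P(\cdot\mid s,a)$ for each $(s,a)$. Fix $\gamma\in(0,1)$, $M>0$ and $s\in\mathcal{S}$. For $u\in[0,1]$, let $\widehat V^{(s,u)}_{\gamma,M}$ be the unique fixed point of $\mathrm{Clip}_M\circ\widehat{\mathcal{T}}^{(s,u)}_\gamma$ and let $\widehat V^\star_{\gamma,M}$ be the unique fixed point of $\mathrm{Clip}_M\circ\widehat{\mathcal{T}}_\gamma$. Then: (i) for any $u,u'\in[0,1]$, $\|\widehat V^{(s,u)}_{\gamma,M}-\widehat V^{(s,u')}_{\gamma,M}\|_\infty\le\frac{|u-u'|}{1-\gamma}$; (ii) with $u^\star(s)=\widehat{\mathcal{T}}_\gamma(\widehat V^\star_{\gamma,M})(s)-\gamma\widehat V^\star_{\gamma,M}(s)$, we have $u^\star(s)\in[0,1]$ and $\widehat V^{(s,u^\star(s))}_{\gamma,M}=\widehat V^\star_{\gamma,M}$; (iii) for any $\varepsilon>0$ there is a finite set $U\subset[0,1]$ with $|U|=\lceil\frac1{2(1-\gamma)\varepsilon}\rceil$ such that almost surely, for every $s\in\mathcal{S}$ there exists $u\in U$ with $\|\widehat V^\star_{\gamma,M}-\widehat V^{(s,u)}_{\gamma,M}\|_\infty\le\varepsilon$; (iv) for any $u\in[0,1]$ and $a\in\mathcal{A}$, $\widehat V^{(s,u)}_{\gamma,M}$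 is independent of the samples $S^1_{s,a},\dots,S^n_{s,a}$.
   Context: $\widehat{\mathcal{T}}_\gamma(x)(s')=\max_a\big(r(s',a)+\gamma\sum_{s''}\widehat P(s''\mid s',a)x(s'')\big)$. $\widehat P^{(s)}$ equals $\widehat P$ except that $s$ is absorbing: $\widehat P^{(s)}(\cdot\mid s'',a)=\widehat P(\cdot\mid s'',a)$ for $s''\ne s$ and $\widehat P^{(s)}(s\mid s,a)=1$. $r^{(s,u)}$ equals $r$ except $r^{(s,u)}(s,a)=u$ for all $a$. $\widehat{\mathcal{T}}^{(s,u)}_\gamma(x)(s')=\max_a\big(r^{(s,u)}(s',a)+\gamma\sum_{s''}\widehat P^{(s)}(s''\mid s',a)x(s'')\big)$. $\mathrm{Clip}_M(V)=\min\{V,(M+\min_{s'}V(s'))\mathbf 1\}$ elementwise; $\mathrm{Clip}_M$ composed with a $\gamma$-discounted Bellman operator is a $\gamma$-contraction in $\|\cdot\|_\infty$, so these fixed points exist and are unique. *)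

(* Defs.v *)
From HB Require Import structures.
From mathcomp Require Import all_boot all_order all_algebra.
From mathcomp Require Import all_classical all_reals ereal.
Set Implicit Arguments. Unset Strict Implicit. Unset Printing Implicit Defensive.
Import Order.TTheory GRing.Theory Num.Theory.
Local Open Scope ring_scope.

Section Defs.
Variables (R : realType) (S A : finType).

Definition fmax (T : finType) (F : T -> R) : R :=
  fine (\big[Order.max/-oo%E]_(t : T) (F t)%:E).
Definition fmin (T : finType) (F : T -> R) : R :=
  fine (\big[Order.min/+oo%E]_(t : T) (F t)%:E).

Definition supnorm (V : S -> R) : R := \big[Num.max/0]_(t : S) `|V t|.

(* Bellman optimality operator for reward rw and kernel Q (Q s a t = Q(t|s,a)) *)
Definition bellman (rw : S -> A -> R) (Q : S -> A -> S -> R) (gamma : R)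
  (x : S -> R) : S -> R :=
  fun s' => fmax (fun a : A => rw s' a + gamma * \sum_(s'' : S) Q s' a s'' * x s'').

Definition absorb (Q : S -> A -> S -> R) (s : S) : S -> A -> S -> R :=
  fun s'' a t => if s'' == s then (t == s)%:R else Q s'' a t.

Definition rew_set (rw : S -> A -> R) (s : S) (u : R) : S -> A -> R :=
  fun s' a => if s' == s then u else rw s' a.

Definition clip (M : R) (V : S -> R) : S -> R :=
  fun t => Num.min (V t) (M + fmin V).

Definition fixpt (F : (S -> R) -> (S -> R)) : S -> R :=
  xget (fun _ => 0) (fun V => F V = V).

(* sample outcomes: X (s,a,i) = S^{i+1}_{s,a} *)
Definition samples (n : nat) := {ffun S * A * 'I_n -> S}.

Definition emp_kernel (n : nat) (X : samples n) : S -> A -> S -> R :=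
  fun s a t => #|[set i : 'I_n | X (s, a, i) == t]|%:R / n%:R.

(* probability of an outcome: samples independent, S^i_{s,a} ~ P(.|s,a) *)
Definition prob (P : S -> A -> S -> R) (n : nat) (X : samples n) : R :=
  \prod_(k : S * A * 'I_n) P k.1.1 k.1.2 (X k).

Definition Pr (P : S -> A -> S -> R) (n : nat) (E : samples n -> Prop) : R :=
  \sum_(X : samples n | `[< E X >]) prob P X.

Definition indep (P : S -> A -> S -> R) (n : nat) (T1 T2 : Type)
  (f : samples n -> T1) (g : samples n -> T2) : Prop :=
  forall (B : set T1) (C : set T2),
    Pr P (fun X => B (f X) /\ C (g X)) =
    Pr P (fun X => B (f X)) * Pr P (fun X => C (g X)).

Definition sample_block (n : nat) (s : S) (a : A) (X : samples n) : {ffun 'I_n -> S} :=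
  [ffun i => X (s, a, i)].

Definition Vstar (rw : S -> A -> R) (gamma M : R) (n : nat) (X : samples n) : S -> R :=
  fixpt (fun V => clip M (bellman rw (emp_kernel X) gamma V)).

Definition Vsu (rw : S -> A -> R) (gamma M : R) (s : S) (u : R) (n : nat)
  (X : samples n) : S -> R :=
  fixpt (fun V => clip M (bellman (rew_set rw s u) (absorb (emp_kernel X) s) gamma V)).

Definition ustar (rw : S -> A -> R) (gamma M : R) (n : nat) (X : samples n) (s : S) : R :=
  bellman rw (emp_kernel X) gamma (Vstar rw gamma M X) s - gamma * Vstar rw gamma M X s.

End Defs.

(* Main.v *)
Require Import Defs.
From HB Require Import structures.
From mathcomp Require Import all_boot all_order all_algebra.
From mathcomp Require Import all_classical all_reals ereal.
From mathcomp Require Import ring lra.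
Set Implicit Arguments. Unset Strict Implicit.
Import Order.TTheory GRing.Theory Num.Theory.
Local Open Scope ring_scope.

Section Aux.
Variable R : realType.

Lemma argmax_ex (T : finType) (F : T -> R) (t0 : T) :
  exists tm, forall t, F t <= F tm.
Proof.
case: (@arg_maxP _ R T t0 xpredT F erefl) => tm _ H.
by exists tm => t; apply: H.
Qed.

Lemma argmin_ex (T : finType) (F : T -> R) (t0 : T) :
  exists tm, forall t, F tm <= F t.
Proof.
have [tm H] := argmax_ex (fun t => - F t) t0.
by exists tm => t; rewrite -lerN2 H.
Qed.

Lemma fmaxP (T : finType) (F : T -> R) (t0 : T) :
  (forall t, F t <= fmax F) /\ exists tm, fmax F = F tm.
Proof.
have [tm H] := argmax_ex F t0.
have -> : fmax F = F tm.
  rewrite /fmax; suff -> : \big[Order.max/-oo%E]_t (F t)%:E = (F tm)%:E by [].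
  apply/le_anti/andP; split.
    by apply: bigmax_le => [|t _]; rewrite ?leNye // lee_fin.
  exact: (le_bigmax _ (fun t => (F t)%:E) tm).
by split => //; exists tm.
Qed.

Lemma fminP (T : finType) (F : T -> R) (t0 : T) :
  (forall t, fmin F <= F t) /\ exists tm, fmin F = F tm.
Proof.
have [tm H] := argmin_ex F t0.
have -> : fmin F = F tm.
  rewrite /fmin; suff -> : \big[Order.min/+oo%E]_t (F t)%:E = (F tm)%:E by [].
  apply/le_anti/andP; split.
    exact: (@bigmin_le _ _ T +oo%E tm (fun t => (F t)%:E)).
  by apply: le_bigmin => [|t _]; rewrite ?leey // lee_fin.
by split => //; exists tm.
Qed.

End Aux.

Section Ops.
Variables (R : realType) (S A : finType).
Variables (gamma M : R).

Definition G (rw : S -> A -> R) (Q : S -> A -> S -> R) (V : S -> R) : S -> R :=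
  clip M (bellman rw Q gamma V).

Definition stoch (Q : S -> A -> S -> R) :=
  (forall t a t', 0 <= Q t a t') /\ (forall t a, \sum_(t' : S) Q t a t' = 1).

Lemma supnorm_ge (V : S -> R) t : `|V t| <= supnorm V.
Proof. exact: (le_bigmax _ (fun t => `|V t|) t). Qed.

Lemma supnorm_le (V : S -> R) c : 0 <= c -> (forall t, `|V t| <= c) -> supnorm V <= c.
Proof. by move=> c0 H; apply: bigmax_le => // t _; apply: H. Qed.

Lemma fmax_cst (T : finType) (t0 : T) (c : R) : fmax (fun _ : T => c) = c.
Proof. by have [_ [tm ->]] := fmaxP (fun _ : T => c) t0. Qed.

Lemma sumQ_le Q (V W : S -> R) c t a : stoch Q -> (forall t, V t <= W t + c) ->
  \sum_t' Q t a t' * V t' <= \sum_t' Q t a t' * W t' + c.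
Proof.
move=> [Q0 Q1] H.
apply: (@le_trans _ _ (\sum_t' Q t a t' * (W t' + c))).
  by apply: ler_sum => t' _; apply: ler_wpM2l.
by rewrite (eq_bigr (fun t' => Q t a t' * W t' + Q t a t' * c)) ?big_split /=
  -?mulr_suml ?Q1 ?mul1r // => t' _; rewrite mulrDr.
Qed.

Lemma bellman_le (a0 : A) rw1 rw2 Q (V W : S -> R) e c : 0 <= gamma -> stoch Q ->
  (forall t a, rw1 t a <= rw2 t a + e) -> (forall t, V t <= W t + c) ->
  forall t, bellman rw1 Q gamma V t <= bellman rw2 Q gamma W t + (e + gamma * c).
Proof.
move=> g0 sQ Hr HV t; rewrite /bellman.
have [_ [a ->]] := fmaxP (fun a => rw1 t a + gamma * \sum_t' Q t a t' * V t') a0.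
have [H2 _] := fmaxP (fun a => rw2 t a + gamma * \sum_t' Q t a t' * W t') a0.
apply: (le_trans _ (lerD (H2 a) (lexx (e + gamma * c)))).
have := Hr t a; have := sumQ_le t a sQ HV => h1 h2.
have h3 := ler_wpM2l g0 h1. rewrite mulrDr in h3. lra.
Qed.

Lemma clip_le (t0 : S) (V W : S -> R) c : (forall t, V t <= W t + c) ->
  forall t, clip M V t <= clip M W t + c.
Proof.
move=> H t; rewrite /clip.
have [HV _] := fminP V t0; have [_ [tm Hm]] := fminP W t0.
have h1 : fmin V <= fmin W + c by rewrite Hm; apply: le_trans (HV tm) (H tm).
case: (leP (W t) (M + fmin W)) => h.
  by rewrite ge_min H.
rewrite ge_min; apply/orP; right; lra.
Qed.

Lemma G_le (t0 : S) (a0 : A) rw1 rw2 Q (V W : S -> R) e c : 0 <= gamma -> stoch Q ->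
  (forall t a, rw1 t a <= rw2 t a + e) -> (forall t, V t <= W t + c) ->
  forall t, G rw1 Q V t <= G rw2 Q W t + (e + gamma * c).
Proof.
move=> g0 sQ Hr HV; apply: clip_le => //.
exact: bellman_le.
Qed.

End Ops.

Section Fix.
Variables (R : realType) (S A : finType).
Variables (gamma M : R) (t0 : S) (a0 : A).
Hypothesis (g0 : 0 <= gamma) (g1 : gamma < 1) (M0 : 0 <= M).

Lemma fix_lip (rw1 rw2 : S -> A -> R) (Q : S -> A -> S -> R) (V W : S -> R) (e : R) : stoch Q -> 0 <= e ->
  (forall t a, `|rw1 t a - rw2 t a| <= e) ->
  G gamma M rw1 Q V = V -> G gamma M rw2 Q W = W ->
  supnorm (fun t => V t - W t) <= e / (1 - gamma).
Proof.
move=> sQ e0 Hr EV EW.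
set d := supnorm _.
have hd t : `|V t - W t| <= d by exact: (supnorm_ge (fun t => V t - W t) t).
have d0 : 0 <= d by apply: le_trans (normr_ge0 _) (hd t0).
have H1 t a : rw1 t a <= rw2 t a + e.
  by have := Hr t a; rewrite ler_norml => /andP[h1 h2]; lra.
have H2 t a : rw2 t a <= rw1 t a + e.
  by have := Hr t a; rewrite ler_norml => /andP[h1 h2]; lra.
have HV t : V t <= W t + d by have := hd t; rewrite ler_norml => /andP[h1 h2]; lra.
have HW t : W t <= V t + d by have := hd t; rewrite ler_norml => /andP[h1 h2]; lra.
have A1 t : V t <= W t + (e + gamma * d).
  by have := G_le M t0 a0 g0 sQ H1 HV t; rewrite EV EW.
have A2 t : W t <= V t + (e + gamma * d).
  by have := G_le M t0 a0 g0 sQ H2 HW t; rewrite EV EW.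
have : d <= e + gamma * d.
  apply: supnorm_le; first by have := mulr_ge0 g0 d0; lra.
  by move=> t; rewrite ler_norml; have := A1 t; have := A2 t; move=> ? ?; apply/andP; split; lra.
move=> h; rewrite ler_pdivlMr ?subr_gt0 //.
rewrite mulrBr mulr1; nra.
Qed.

Lemma fix_uniq (rw : S -> A -> R) (Q : S -> A -> S -> R) (V W : S -> R) : stoch Q ->
  G gamma M rw Q V = V -> G gamma M rw Q W = W -> V = W.
Proof.
move=> sQ EV EW.
have := fix_lip (e := 0) sQ (lexx 0) _ EV EW.
rewrite mul0r => H; apply: boolp.funext => t.
have : `|V t - W t| <= 0.
  apply: le_trans (supnorm_ge (fun t => V t - W t) t) (H _).
  by move=> t' a; rewrite subrr normr0.
by rewrite normr_le0 subr_eq0 => /eqP.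
Qed.

Lemma G_mono (rw : S -> A -> R) (Q : S -> A -> S -> R) (V W : S -> R) : stoch Q -> (forall t, V t <= W t) ->
  forall t, G gamma M rw Q V t <= G gamma M rw Q W t.
Proof.
move=> sQ H t.
have h := @G_le R S A gamma M t0 a0 rw rw Q V W 0 0 g0 sQ.
rewrite mulr0 !addr0 in h; rewrite -[X in _ <= X]addr0; apply: h => [t' a|t']; rewrite addr0 //.
Qed.

Lemma bellman0 (Q : S -> A -> S -> R) : stoch Q -> forall t, bellman (fun _ _ => 0) Q gamma (fun _ : S => 0) t = 0 :> R.
Proof.
move=> sQ t; rewrite /bellman.
have -> : (fun a : A => 0 + gamma * \sum_(s'' : S) Q t a s'' * 0) = fun _ => 0 :> R.
  by apply: boolp.funext => a; rewrite big1 ?mulr0 ?addr0 // => i _; rewrite mulr0.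
exact: fmax_cst.
Qed.

Lemma fix_exists (rw : S -> A -> R) (Q : S -> A -> S -> R) : stoch Q -> (forall t a, 0 <= rw t a <= 1) ->
  exists V, G gamma M rw Q V = V.
Proof.
move=> sQ Hr.
pose L (V : S -> R) := forall t, V t <= G gamma M rw Q V t.
have Lb V : L V -> forall t, V t <= 1 / (1 - gamma).
  move=> LV t.
  have [tm Htm] := argmax_ex V t0.
  apply: le_trans (Htm t) _.
  have h1 : V tm <= bellman rw Q gamma V tm.
    by apply: le_trans (LV tm) _; rewrite /G /clip ge_min lexx.
  have h2 := @bellman_le R S A gamma a0 rw (fun _ _ => 0) Q V (fun _ => 0) 1 (V tm)
     g0 sQ.
  have h3 : bellman rw Q gamma V tm <= 1 + gamma * V tm.
    have Ha : forall t a, rw t a <= (fun _ _ => 0) t a + 1.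
      by move=> t' a; rewrite add0r; have := Hr t' a; lra.
    have Hb : forall t, V t <= (fun _ => 0) t + V tm by move=> t'; rewrite add0r.
    by have := h2 Ha Hb tm; rewrite bellman0 // add0r.
  have {}h3 : V tm <= 1 + gamma * V tm by apply: le_trans h1 h3.
  rewrite ler_pdivlMr ?subr_gt0 //.
  nra.
have L0 : L (fun _ => 0).
  move=> t; rewrite /G /clip le_min.
  have Hb t' : 0 <= bellman rw Q gamma (fun _ => 0) t'.
    have [H _] := fmaxP (fun a => rw t' a + gamma * \sum_(s'' : S) Q t' a s'' * 0) a0.
    apply: le_trans (H a0); rewrite big1 ?mulr0 ?addr0; first by have := Hr t' a0; lra.
    by move=> i _; rewrite mulr0.
  have [_ [tm ->]] := fminP (bellman rw Q gamma (fun _ => 0)) t0.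
  by rewrite Hb /= addr_ge0 // Hb.
pose E t : set R := fun x => exists2 V, L V & x = V t.
have hs t : has_sup (E t).
  split; first by exists 0; exists (fun _ => 0).
  by exists (1 / (1 - gamma)) => x [V LV ->]; apply: Lb.
pose Vb t := sup (E t).
have up V : L V -> forall t, V t <= Vb t.
  by move=> LV t; apply: (sup_upper_bound (hs t)); exists V.
have LVb : L Vb.
  move=> t; apply: ge_sup; first by exists 0; exists (fun _ => 0).
  move=> x [V LV ->]; apply: le_trans (LV t) _.
  by apply: G_mono => // t'; apply: up.
have LG : L (G gamma M rw Q Vb) by move=> t; apply: G_mono.
exists Vb; apply: boolp.funext => t; apply/le_anti/andP; split; last exact: LVb.
exact: up LG t.
Qed.

Lemma fixpt_G (rw : S -> A -> R) (Q : S -> A -> S -> R) (V : S -> R) : stoch Q -> G gamma M rw Q V = V ->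
  fixpt (G gamma M rw Q) = V.
Proof.
move=> sQ EV.
have := @xgetPex _ (fun _ : S => 0 : R) (fun V => G gamma M rw Q V = V) (ex_intro _ V EV).
by move=> H; apply: fix_uniq sQ H EV.
Qed.

Lemma fixpt_fix (rw : S -> A -> R) (Q : S -> A -> S -> R) : stoch Q -> (forall t a, 0 <= rw t a <= 1) ->
  G gamma M rw Q (fixpt (G gamma M rw Q)) = fixpt (G gamma M rw Q).
Proof.
move=> sQ Hr; have [V EV] := fix_exists sQ Hr.
by rewrite (fixpt_G sQ EV).
Qed.

End Fix.

Section Stoch.
Variables (R : realType) (S A : finType).

Lemma card_sum n (f : 'I_n -> S) : (\sum_(t : S) #|[set i | f i == t]| = n)%N.
Proof.
transitivity #|'I_n|; last by rewrite card_ord.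
rewrite -sum1_card (partition_big f xpredT) //=.
by apply: eq_bigr => t _; rewrite -sum1_card; apply: eq_bigl => i; rewrite inE.
Qed.

Lemma emp_stoch n (X : samples S A n) : (0 < n)%N -> stoch (emp_kernel R X).
Proof.
move=> n0; split.
  by move=> t a t'; rewrite /emp_kernel divr_ge0 // ler0n.
move=> t a; rewrite /emp_kernel -mulr_suml -natr_sum card_sum divff //.
by rewrite pnatr_eq0 -lt0n.
Qed.

Lemma absorb_stoch (Q : S -> A -> S -> R) s : stoch Q -> stoch (absorb Q s).
Proof.
move=> [Q0 Q1]; split.
  by move=> t a t'; rewrite /absorb; case: (t == s) => //; rewrite ler0n.
move=> t a; rewrite /absorb; case: (t == s) => //.
rewrite (bigD1 s) //= eqxx big1 ?addr0 // => t' /negbTE ->; by [].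
Qed.

Lemma rew_set_bd (rw : S -> A -> R) s u : (forall t a, 0 <= rw t a <= 1) -> 0 <= u <= 1 ->
  forall t a, 0 <= rew_set rw s u t a <= 1.
Proof. by move=> H Hu t a; rewrite /rew_set; case: (t == s). Qed.

End Stoch.

Section Main.
Variables (R : realType) (S A : finType) (rw : S -> A -> R) (n : nat) (gamma M : R)
  (t0 : S) (a0 : A).
Hypotheses (hr : forall t a, 0 <= rw t a <= 1) (n0 : (0 < n)%N) (g0 : 0 <= gamma)
  (g1 : gamma < 1) (M0 : 0 < M).

Lemma Vsu_fix s u (X : samples S A n) : 0 <= u <= 1 ->
  G gamma M (rew_set rw s u) (absorb (emp_kernel R X) s) (Vsu rw gamma M s u X)
  = Vsu rw gamma M s u X.
Proof.
move=> hu; apply: (fixpt_fix t0 a0 g0 g1 (ltW M0)).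
  exact/absorb_stoch/emp_stoch.
exact: rew_set_bd.
Qed.

Lemma Vstar_fix (X : samples S A n) :
  G gamma M rw (emp_kernel R X) (Vstar rw gamma M X) = Vstar rw gamma M X.
Proof.
apply: (fixpt_fix t0 a0 g0 g1 (ltW M0)) => //.
exact/emp_stoch.
Qed.

Lemma part1 s (X : samples S A n) u u' : 0 <= u <= 1 -> 0 <= u' <= 1 ->
  supnorm (fun t => Vsu rw gamma M s u X t - Vsu rw gamma M s u' X t)
    <= `|u - u'| / (1 - gamma).
Proof.
move=> hu hu'.
apply: (fix_lip t0 a0 g0 g1 _ (normr_ge0 _) _ (Vsu_fix s X hu) (Vsu_fix s X hu')).
  exact/absorb_stoch/emp_stoch.
move=> t a; rewrite /rew_set; case: (t == s) => //.
by rewrite subrr normr0 normr_ge0.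
Qed.

Lemma sum_lb (Q : S -> A -> S -> R) (V : S -> R) c t a : stoch Q -> (forall t, c <= V t) ->
  c <= \sum_t' Q t a t' * V t'.
Proof.
move=> [Q0 Q1] H.
apply: (@le_trans _ _ (\sum_t' Q t a t' * c)).
  by rewrite -mulr_suml Q1 mul1r.
by apply: ler_sum => t' _; apply: ler_wpM2l.
Qed.

Lemma bellman_lb (Q : S -> A -> S -> R) (V : S -> R) c t : stoch Q -> (forall t, c <= V t) ->
  gamma * c <= bellman rw Q gamma V t.
Proof.
move=> sQ H; rewrite /bellman.
have [H1 _] := fmaxP (fun a => rw t a + gamma * \sum_t' Q t a t' * V t') a0.
apply: le_trans (H1 a0); have := hr t a0; have := ler_wpM2l g0 (sum_lb t a0 sQ H).
move=> h1 /andP[h2 _]; lra.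
Qed.

Lemma bellman_ub (Q : S -> A -> S -> R) (V : S -> R) c t : stoch Q -> (forall t, V t <= c) ->
  bellman rw Q gamma V t <= 1 + gamma * c.
Proof.
move=> sQ H.
have Ha : forall t a, rw t a <= (fun _ _ => 0) t a + 1.
  by move=> t' a; rewrite add0r; have := hr t' a; case/andP.
have Hb : forall t, V t <= (fun _ => 0) t + c by move=> t'; rewrite add0r.
by have := bellman_le a0 g0 sQ Ha Hb t; rewrite (bellman0 gamma a0) // add0r.
Qed.

Lemma part2 (X : samples S A n) s :
  0 <= ustar rw gamma M X s <= 1 /\
  Vsu rw gamma M s (ustar rw gamma M X s) X = Vstar rw gamma M X.
Proof.
have g0' := g0; have g1' := g1; have M0' := M0.
have sQ := emp_stoch R X n0.
set V := Vstar rw gamma M X.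
have EV := Vstar_fix X; rewrite -/V in EV.
set T := bellman rw (emp_kernel R X) gamma V.
have EVt t : V t = Num.min (T t) (M + fmin T) by rewrite -{1}EV.
have VT t : V t <= T t by rewrite EVt ge_min lexx.
have [vm Hvm] := argmin_ex V t0.
have [vM HvM] := argmax_ex V t0.
have [Hmin [tm Htm]] := fminP T t0.
have V0 t : 0 <= V t.
  apply: le_trans (Hvm t).
  have h1 : gamma * V vm <= V vm.
    rewrite [X in _ <= X]EVt le_min; apply/andP; split; first exact: bellman_lb.
    rewrite Htm; have := bellman_lb tm sQ Hvm; rewrite -/T; lra.
  nra.
have hT : T s <= 1 + gamma * V vM by apply: bellman_ub.
have hM : (1 - gamma) * V vM <= 1.
  have := VT vM; have := bellman_ub vM sQ HvM; rewrite -/T; nra.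
split.
  rewrite /ustar -/V -/T; apply/andP; split.
    have := VT s; have := V0 s; nra.
  have := EVt s; case: (leP (T s) (M + fmin T)) => h Vs.
    rewrite Vs; have := HvM s; nra.
  have Vle t : V t <= V s by rewrite Vs EVt ge_min lexx orbT.
  have := Vle vM; nra.
rewrite /Vsu; apply: (fixpt_G t0 a0 g0 g1); first exact/absorb_stoch.
rewrite -[RHS]EV /G; congr clip; apply: boolp.funext => t.
rewrite /bellman /T /bellman /absorb /rew_set.
case: eqP => [->|ne].
  have -> : (fun a : A => ustar rw gamma M X s + gamma * \sum_(s'' : S)
      (s'' == s)%:R * V s'') = fun _ => ustar rw gamma M X s + gamma * V s.
    apply: boolp.funext => a; congr (_ + gamma * _).
    rewrite (bigD1 s) //= eqxx mul1r big1 ?addr0 // => t' /negbTE ->; by rewrite mul0r.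
  by rewrite (fmax_cst a0) /ustar -/V subrK.
by [].
Qed.

End Main.

Section Grid.
Variable R : realType.

Lemma grid_cover (N : nat) (v : R) : (0 < N)%N -> 0 <= v <= 1 ->
  exists2 k, (k < N)%N & `|v - (2 * k + 1)%:R / (2 * N)%:R| <= 1 / (2 * N)%:R.
Proof.
move=> N0 /andP[v0 v1].
have [k [kN k1 k2]] : exists k, [/\ (k < N)%N, k%:R <= v * N%:R & v * N%:R <= k%:R + 1].
  have f0 : 0 <= Num.floor (v * N%:R) by rewrite floor_ge0 mulr_ge0.
  have hl := floor_le (v * N%:R); have hu := floorD1_gt (v * N%:R).
  have vN : v * N%:R <= N%:R by rewrite -{2}[N%:R]mul1r ler_wpM2r.
  move: f0 hl hu; case: (Num.floor (v * N%:R)) => [k|k] // _ hl hu.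
  rewrite intrD in hu.
  case: (ltnP k N) => kN.
    by exists k; split => //; apply: ltW.
  exists N.-1; split; first by rewrite prednK.
    apply: le_trans _ hl; rewrite ler_nat; apply: leq_trans kN; exact: leq_pred.
  by rewrite natr1 prednK.
exists k => //.
have Npos : 0 < (2 * N)%:R :> R by rewrite ltr0n muln_gt0.
have -> : v - (2 * k + 1)%:R / (2 * N)%:R = (v * (2 * N)%:R - (2 * k + 1)%:R) / (2 * N)%:R.
  by rewrite mulrBl mulfK // lt0r_neq0.
rewrite normrM normfV (ger0_norm (ltW Npos)) ler_wpM2r ?invr_ge0 ?(ltW Npos) //.
rewrite natrM natrD natrM mulrCA ler_norml.
have h1 : 2%:R * k%:R <= 2%:R * (v * N%:R) :> R by rewrite ler_wpM2l.
have h2 : 2%:R * (v * N%:R) <= 2%:R * (k%:R + 1) :> R by rewrite ler_wpM2l.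
rewrite mulrDr mulr1 in h2.
apply/andP; split; lra.
Qed.

End Grid.

Section Prob.
Variables (R : realType) (S A : finType) (n : nat) (P : S -> A -> S -> R).
Hypothesis P1 : forall t a, \sum_(t' : S) P t a t' = 1.

Lemma prob_sum1 : \sum_(X : samples S A n) prob P X = 1.
Proof.
rewrite /prob -(bigA_distr_bigA (fun (k : S * A * 'I_n) t => P k.1.1 k.1.2 t)).
by rewrite big1 // => k _; apply: P1.
Qed.

Lemma Pr_all (E : samples S A n -> Prop) : (forall X, E X) -> Pr P E = 1.
Proof.
move=> H; rewrite /Pr -prob_sum1; apply: eq_bigl => X; exact/asboolT.
Qed.

Lemma Pr_ind (E : samples S A n -> Prop) :
  Pr P E = \sum_(X : samples S A n) (`[< E X >])%:R * prob P X.
Proof.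
rewrite /Pr big_mkcond; apply: eq_bigr => X _.
by case: asboolP => _; rewrite ?mul1r ?mul0r.
Qed.

Definition merge (K : pred (S * A * 'I_n)) (X Y : samples S A n) : samples S A n :=
  [ffun k => if K k then Y k else X k].

Lemma merge_inv K X Y : merge K (merge K X Y) (merge K Y X) = X.
Proof. by apply/ffunP => k; rewrite !ffunE; case: (K k). Qed.

Lemma prob_merge K X Y :
  prob P (merge K X Y) * prob P (merge K Y X) = prob P X * prob P Y.
Proof.
rewrite /prob -!big_split /=; apply: eq_bigr => k _.
by rewrite !ffunE; case: (K k) => //; rewrite mulrC.
Qed.

Lemma indep_merge K (T1 T2 : Type) (f : samples S A n -> T1) (g : samples S A n -> T2) :
  (forall X Y, f (merge K X Y) = f X) -> (forall X Y, g (merge K X Y) = g Y) ->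
  indep P f g.
Proof.
move=> hf hg B C; rewrite !Pr_ind.
pose F := fun (p : samples S A n * samples S A n) =>
  (`[< B (f p.1) /\ C (g p.1) >])%:R * prob P p.1 * prob P p.2 : R.
pose phi := fun (p : samples S A n * samples S A n) => (merge K p.1 p.2, merge K p.2 p.1).
have phiK : cancel phi phi by case=> X Y; rewrite /phi /= !merge_inv.
have L : \sum_(X : samples S A n) (`[< B (f X) /\ C (g X) >])%:R * prob P X
    = \sum_p F p.
  rewrite -(pair_bigA _ (fun X Y => F (X, Y))) /=; apply: eq_bigr => X _.
  by rewrite /F /= -big_distrr /= prob_sum1 mulr1.
rewrite L (reindex_inj (can_inj phiK)) /=.
rewrite -(pair_bigA _ (fun X Y => F (phi (X, Y)))) /= big_distrl /=.
apply: eq_bigr => X _; rewrite big_distrr /=; apply: eq_bigr => Y _.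
rewrite /F /phi /= -mulrA prob_merge hf hg.
case: asboolP => [[h1 h2]|h].
  by rewrite (asboolT h1) (asboolT h2) !mul1r.
case: (asboolP (B (f X))) => h1; case: (asboolP (C (g Y))) => h2 //;
  rewrite ?mul0r ?mulr0 //.
by exfalso; apply: h.
Qed.

End Prob.

Lemma grid_range (R : realType) (N k : nat) : (k < N)%N ->
  0 <= ((2 * k + 1)%:R / (2 * N)%:R : R) <= 1.
Proof.
move=> kN; have Npos : 0 < (2 * N)%:R :> R by rewrite ltr0n muln_gt0 (leq_ltn_trans (leq0n k) kN).
apply/andP; split; first by rewrite divr_ge0 // ler0n.
rewrite ler_pdivrMr // mul1r ler_nat.
apply: (@leq_trans (2 * k.+1)); first by rewrite mulnS addnC leq_add2r.
by rewrite leq_mul2l kN orbT.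
Qed.

Unset Implicit Arguments. Set Strict Implicit.

Theorem lemma20 (R : realType) (S A : finType) (P : S -> A -> S -> R)
  (rw : S -> A -> R) (n : nat) (gamma M : R) (s : S) :
  (0 < #|A|)%N ->
  (forall t a t', 0 <= P t a t') ->
  (forall t a, \sum_(t' : S) P t a t' = 1) ->
  (forall t a, 0 <= rw t a <= 1) ->
  (0 < n)%N ->
  0 < gamma < 1 -> 0 < M ->
  (* (i) *)
  (forall (X : samples S A n) (u u' : R), 0 <= u <= 1 -> 0 <= u' <= 1 ->
     supnorm (fun t => Vsu rw gamma M s u X t - Vsu rw gamma M s u' X t)
       <= `|u - u'| / (1 - gamma))
  (* (ii) *)
  /\ (forall X : samples S A n,
        0 <= ustar rw gamma M X s <= 1 /\
        Vsu rw gamma M s (ustar rw gamma M X s) X = Vstar rw gamma M X)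
  (* (iii) *)
  /\ (forall eps : R, 0 < eps ->
        exists U : seq R,
          [/\ uniq U, (forall u, u \in U -> 0 <= u <= 1),
              (size U)%:Z = Num.ceil (1 / (2 * (1 - gamma) * eps)) &
              Pr P (fun X : samples S A n => forall t : S, exists2 u, u \in U &
                 supnorm (fun t' => Vstar rw gamma M X t' - Vsu rw gamma M t u X t')
                   <= eps) = 1])
  (* (iv) *)
  /\ (forall (u : R) (a : A), 0 <= u <= 1 ->
        indep P (fun X : samples S A n => Vsu rw gamma M s u X)
                (sample_block s a)).
Proof.
move=> hA P0 P1 hr n0 /andP[g0 g1] M0.
have g0' := ltW g0.
have [a0 _] := card_gt0P hA.
split; [|split; [|split]].
- by move=> X u u' hu hu'; exact: (part1 s a0 hr n0 g0' g1 M0 s X hu hu').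
- by move=> X; exact: (part2 s a0 hr n0 g0' g1 M0 X s).
- move=> eps e0.
  set x := 1 / (2 * (1 - gamma) * eps).
  have q0 : 0 < 2 * (1 - gamma) * eps.
    by rewrite mulr_gt0 // mulr_gt0 // subr_gt0.
  have x0 : 0 < x by rewrite /x divr_gt0.
  have c0 : (0 < Num.ceil x)%R by rewrite ceil_gt0.
  have [N EN] : exists N : nat, Num.ceil x = N%:Z.
    by move: c0; case: (Num.ceil x) => [N|k] // _; exists N.
  have N0 : (0 < N)%N by move: c0; rewrite EN ltz_nat.
  have xN : x <= N%:R by have := ceil_ge x; rewrite EN.
  have Npos : 0 < (2 * N)%:R :> R by rewrite ltr0n muln_gt0.
  exists [seq (2 * k + 1)%:R / (2 * N)%:R | k <- iota 0 N]; split.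
  + rewrite map_inj_in_uniq ?iota_uniq // => k k' _ _.
    move/(congr1 (fun y => y * (2 * N)%:R)); rewrite !divfK ?(lt0r_neq0 Npos) //.
    by move/eqP; rewrite eqr_nat eqn_add2r eqn_mul2l /= => /eqP.
  + move=> u /mapP [k]; rewrite mem_iota add0n => /andP[_ kN] ->.
    exact: grid_range.
  + by rewrite size_map size_iota EN.
  + apply: Pr_all => // X t.
    have [hu Eu] := part2 s a0 hr n0 g0' g1 M0 X t.
    have [k kN hk] := grid_cover N0 hu.
    exists ((2 * k + 1)%:R / (2 * N)%:R); first by apply/mapP; exists k; rewrite ?mem_iota.
    rewrite -Eu.
    apply: le_trans (part1 s a0 hr n0 g0' g1 M0 t X hu (grid_range R kN)) _.
    rewrite ler_pdivrMr ?subr_gt0 //.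
    apply: le_trans hk _.
    rewrite ler_pdivrMr // natrM.
    move: xN; rewrite /x ler_pdivrMr // => h.
    have h' : 1 <= N%:R * (2 * (1 - gamma) * eps) by [].
    have e' : eps * (1 - gamma) * (2%:R * N%:R) = N%:R * (2 * (1 - gamma) * eps).
      by ring.
    by rewrite e'.
- move=> u a hu.
  apply: (@indep_merge R S A n P P1 (fun k => (k.1.1 == s) && (k.1.2 == a))) => X Y.
    have E : absorb (emp_kernel R (merge (fun k => (k.1.1 == s) && (k.1.2 == a)) X Y)) s
           = absorb (emp_kernel R X) s.
      apply: boolp.funext => s''; apply: boolp.funext => a'; apply: boolp.funext => t'.
      rewrite /absorb; case: eqP => // ne; rewrite /emp_kernel.
      congr (_%:R / _); apply: eq_card => i; rewrite !inE ffunE /=.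
      by have -> : (s'' == s) = false by apply/eqP.
    by rewrite /Vsu E.
  by apply/ffunP => i; rewrite !ffunE /= !eqxx.
Qed.
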